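(* Let $\mathsf{X}=\mathbb{R}^d$ with a probability measure $\mu$, let $(\mathsf{Y},\nu)$ be a Polish probability space, let $c:\mathsf{X}\times\mathsf{Y}\to[0,\infty)$ be continuous and differentiable in $x$ with $\nabla_x c$ continuous, let $\pi_\varepsilon$ be the $(c,\varepsilon)$-cyclically invariant coupling for each $\varepsilon>0$ (assumed to exist), and assume $\pi_\varepsilon\to\pi_*$ weakly as $\varepsilon\to0$ for some $\pi_*\in\Pi(\mu,\nu)$; let $\Gamma:=\operatorname{spt}\pi_*$ and $\mathsf{X}_0:=\operatorname{proj}_{\mathsf{X}}\Gamma$. Let $x\in\operatorname{Int}\mathsf{X}_0$ and $y\in\mathsf{Y}$. Let $\pi_*$ be given by a transport map $T:\mathsf{X}_0\to\mathsf{Y}$ (i.e., $\Gamma=\{(x',T(x')):x'\in\mathsf{X}_0\}$) which is continuous at $x$. If $\nabla_x c(x,y)-\nabla_x c(x,T(x))\neq0$, then $I(x,y)>0$.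
   Context: $\Pi(\mu,\nu)$ is the set of couplings of $\mu,\nu$ and $P:=\mu\otimes\nu$. A coupling $\pi$ is $(c,\varepsilon)$-cyclically invariant if $\pi\sim P$ and its density admits a version $\frac{d\pi}{dP}:\mathsf{X}\times\mathsf{Y}\to(0,\infty)$ with $\prod_{i=1}^k\frac{d\pi}{dP}(x_i,y_i)=\exp\big(-\frac1\varepsilon[\sum_{i=1}^k c(x_i,y_i)-\sum_{i=1}^k c(x_i,y_{i+1})]\big)\prod_{i=1}^k\frac{d\pi}{dP}(x_i,y_{i+1})$ for all $k$ and points, $y_{k+1}:=y_1$. The function $I$ is $I(x,y):=\sup_{k\ge2}\sup_{(x_i,y_i)_{i=2}^k\subset\Gamma}\sup_{\sigma\in\Sigma(k)}\sum_{i=1}^k c(x_i,y_i)-\sum_{i=1}^k c(x_i,y_{\sigma(i)})$ with $(x_1,y_1):=(x,y)$ and $\Sigma(k)$ the permutations of $\{1,\dots,k\}$. *)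

(* Defs.v *)
From HB Require Import structures.
From mathcomp Require Import all_boot all_order all_algebra all_fingroup.
From mathcomp Require Import all_classical all_reals all_analysis.
Import numFieldNormedType.Exports.
Import Order.TTheory GRing.Theory Num.Theory.

Set Implicit Arguments.
Unset Strict Implicit.
Unset Printing Implicit Defensive.

Local Open Scope classical_set_scope.
Local Open Scope ring_scope.

Definition Borel (T : ptopologicalType) := g_sigma_algebraType (@open T).

Definition separable_space (T : topologicalType) :=
  exists D : set T, countable D /\ closure D = setT.

Definition is_coupling (R : realType) (X Y : ptopologicalType)
  (mu : set (Borel X) -> \bar R) (nu : set (Borel Y) -> \bar R)
  (pi : set (Borel X * Borel Y) -> \bar R) : Prop :=
  (forall A : set (Borel X), measurable A -> pi (A `*` setT) = mu A) /\
  (forall B : set (Borel Y), measurable B -> pi (setT `*` B) = nu B).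

Definition cyclically_invariant (R : realType) (X Y : ptopologicalType)
  (c : X -> Y -> R) (eps : R)
  (mu : set (Borel X) -> \bar R) (nu : set (Borel Y) -> \bar R)
  (pi : set (Borel X * Borel Y) -> \bar R) : Prop :=
  let P := (mu \x nu)%E in
  pi `<< P /\ P `<< pi /\
  exists f : X -> Y -> R,
    (forall x y, 0 < f x y) /\
    measurable_fun setT (fun z : Borel X * Borel Y => f z.1 z.2) /\
    (forall A : set (Borel X * Borel Y), measurable A ->
        pi A = (\int[P]_(z in A) (f z.1 z.2)%:E)%E) /\
    (forall (k : nat) (xs : 'I_k -> X) (ys : 'I_k -> Y),
        \prod_(i < k) f (xs i) (ys i) =
        expR (- eps^-1 * (\sum_(i < k) c (xs i) (ys i)
                          - \sum_(i < k) c (xs i) (ys (ordS i))))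
        * \prod_(i < k) f (xs i) (ys (ordS i))).

Definition spt (R : realType) (X Y : ptopologicalType)
  (pi : set (Borel X * Borel Y) -> \bar R) : set (X * Y) :=
  [set z | forall U : set (X * Y), open U -> U z -> (0 < pi U)%E].

Definition weak_cvg_at0 (R : realType) (X Y : ptopologicalType)
  (pie : R -> set (Borel X * Borel Y) -> \bar R)
  (pistar : set (Borel X * Borel Y) -> \bar R) : Prop :=
  forall f : X * Y -> R, continuous f -> (exists M : R, forall z, `|f z| <= M) ->
    (fun e => \int[pie e]_z (f z)%:E)%E @ 0^'+ --> (\int[pistar]_z (f z)%:E)%E.

Definition gradx (R : realType) (d : nat) (Y : Type)
  (c : 'rV[R]_d -> Y -> R) (x : 'rV[R]_d) (y : Y) : 'rV[R]_d :=
  \row_(i < d) derive (fun z => c z y) x (delta_mx 0 i).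

Definition Ifun (R : realType) (X Y : Type) (c : X -> Y -> R)
  (Gamma : set (X * Y)) (x : X) (y : Y) : \bar R :=
  ereal_sup [set r | exists (k : nat) (xs : 'I_k -> X) (ys : 'I_k -> Y)
                       (s : {perm 'I_k}),
     [/\ (2 <= k)%N,
         (forall i : 'I_k, val i = 0%N -> xs i = x /\ ys i = y),
         (forall i : 'I_k, (0 < val i)%N -> Gamma (xs i, ys i)) &
         r = (\sum_(i < k) c (xs i) (ys i)
              - \sum_(i < k) c (xs i) (ys (s i)))%:E]].

(* Main.v *)
Require Import Defs.
From HB Require Import structures.
From mathcomp Require Import all_boot all_order all_algebra all_fingroup.
From mathcomp Require Import all_classical all_reals all_analysis.
From mathcomp Require Import lra.
Import numFieldNormedType.Exports.
Import Order.TTheory GRing.Theory Num.Theory.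
Local Open Scope classical_set_scope.
Local Open Scope ring_scope.

Lemma hderiv (R : realType) (d : nat) (f : 'rV[R]_d -> R) (z v : 'rV[R]_d) (s : R) :
  differentiable f (s *: v + z) ->
  is_derive s 1 (fun t : R => f (t *: v + z))
    (\sum_(i < d) v 0 i * derive f (s *: v + z) (delta_mx 0 i)).
Proof.
move=> df.
have E : (fun t : R => t^-1 *: ((fun t : R => f (t *: v + z)) (t *: 1 + s) - (fun t : R => f (t *: v + z)) s))
   = (fun t => t^-1 *: (f (t *: v + (s *: v + z)) - f (s *: v + z))).
  apply/funext => t /=; by rewrite [t *: 1]mulr1 scalerDl addrA.
have dv : derivable f (s *: v + z) v by exact: diff_derivable.
have dh : derivable (fun t : R => f (t *: v + z)) s 1.
  rewrite /derivable; rewrite [X in cvg (X @ _)]E; exact: dv.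
apply: DeriveDef => //.
have -> : 'D_1 (fun t : R => f (t *: v + z)) s = 'D_v f (s *: v + z) by rewrite /derive E.
rewrite deriveE //.
set p := s *: v + z.
have -> : 'd f p v = 'd f p (\sum_(j < d) v 0 j *: delta_mx 0 j) by rewrite -row_sum_delta.
rewrite linear_sum /=.
apply: eq_bigr => i _; rewrite linearZ /= deriveE //.
Qed.

Lemma mvt_c (R : realType) (d : nat) (f : 'rV[R]_d -> R)
  (fdiff : forall z, differentiable f z) (x v : 'rV[R]_d) (t : R) :
  0 < t -> exists2 s, s \in `]0, t[ &
    f (t *: v + x) - f x = (\sum_(i < d) v 0 i * derive f (s *: v + x) (delta_mx 0 i)) * t.
Proof.
move=> t0.
have D : forall s : R, is_derive s (1 : R) (fun t : R => f (t *: v + x))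
    (\sum_(i < d) v 0 i * derive f (s *: v + x) (delta_mx 0 i)).
  by move=> s; apply: hderiv.
have C : {within `[0, t], continuous (fun t : R => f (t *: v + x))}.
  apply: derivable_within_continuous => s _.
  by have [] := D s.
have [s s_in E] := MVT t0 (fun s (_ : s \in `]0, t[) => D s) C.
by exists s => //; rewrite -[t in RHS]subr0 -E scale0r add0r.
Qed.

Lemma phi_cont (R : realType) (d : nat) (Z : topologicalType) (G : Z -> 'rV[R]_d)
  (v : 'rV[R]_d) : continuous G -> continuous (fun p => \sum_(i < d) v 0 i * G p 0 i).
Proof.
move=> cG p.
apply: (@cvg_big R 'I_d +%R 0 xpredT (fun x : R * R => add_continuous x)) => // i _.
apply: cvgMl_tmp.
exact: (continuous_comp (cG p) (@coord_continuous R 1 d 0 i (G p))).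
Qed.

Theorem lemma5p2 (R : realType) (d : nat)
  (Y : completePseudoMetricType R)
  (HYhaus : hausdorff_space Y) (HYsep : separable_space Y)
  (mu : probability (Borel 'rV[R]_d) R) (nu : probability (Borel Y) R)
  (c : 'rV[R]_d -> Y -> R)
  (c_ge0 : forall x y, 0 <= c x y)
  (c_cont : continuous (fun z : 'rV[R]_d * Y => c z.1 z.2))
  (c_diff : forall x y, differentiable (fun z => c z y) x)
  (gradc_cont : continuous (fun z : 'rV[R]_d * Y => gradx c z.1 z.2))
  (pie : R -> probability (Borel 'rV[R]_d * Borel Y)%type R)
  (Hpie : forall eps : R, 0 < eps ->
     is_coupling mu nu (pie eps) /\ cyclically_invariant c eps mu nu (pie eps))
  (pistar : probability (Borel 'rV[R]_d * Borel Y)%type R)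
  (Hstar : is_coupling mu nu pistar)
  (Hweak : weak_cvg_at0 pie pistar)
  (T : 'rV[R]_d -> Y) (x : 'rV[R]_d) (y : Y)
  (Hx : interior (fst @` spt pistar) x)
  (HT : spt pistar = [set z | (fst @` spt pistar) z.1 /\ z.2 = T z.1])
  (HTcont : {for x, continuous T})
  (Hgrad : gradx c x y != gradx c x (T x)) :
  (0 < Ifun c (spt pistar) x y)%E.
Proof.
set X0 := fst @` spt pistar.
set v := gradx c x (T x) - gradx c x y.
set Phi := fun p : 'rV[R]_d * Y => \sum_(i < d) v 0 i * gradx c p.1 p.2 0 i.
have cPhi : continuous Phi := @phi_cont R d _ _ v gradc_cont.
have PhiE : forall z w, Phi (z, w) =
    \sum_(i < d) v 0 i * derive (fun z => c z w) z (delta_mx 0 i).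
  move=> z w; rewrite /Phi /=. apply: eq_bigr => i _. by congr (_ * _); unfold gradx; rewrite mxE.
set a := Phi (x, T x); set b := Phi (x, y).
have ab : b < a.
  rewrite -subr_gt0 /a /b /Phi /= -sumrB.
  have -> : \sum_(i < d) (v 0 i * gradx c x (T x) 0 i - v 0 i * gradx c x y 0 i)
      = \sum_(i < d) v 0 i ^+ 2.
    apply: eq_bigr => j _; rewrite -mulrBr expr2; congr (_ * _); by rewrite /v !mxE.
  have [i vi] : exists i, v 0 i != 0.
    case: (pselect (exists i, v 0 i != 0)) => // H; exfalso.
    move: Hgrad; rewrite eq_sym -subr_eq0 => /negP; apply; apply/eqP/rowP => i.
    rewrite [RHS]mxE; apply/eqP/negP => ne; apply: H; exists i; exact/negP.
  rewrite (bigD1 i) //=.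
  have H1 : 0 < v 0 i ^+ 2 by rewrite lt_def sqrf_eq0 vi sqr_ge0.
  have H2 : 0 <= \sum_(j < d | j != i) v 0 j ^+ 2 by apply: sumr_ge0 => j _; exact: sqr_ge0.
  lra.
set m := (a + b) / 2.
have Ha : \forall p \near (x, T x), m < Phi p.
  by apply: (cvgr_gt _ (cPhi (x, T x))); move: ab; rewrite /m /a /b => ab; lra.
have Hb : \forall p \near (x, y), Phi p < m.
  by apply: (cvgr_lt _ (cPhi (x, y))); move: ab; rewrite /m /a /b => ab; lra.
case: Ha => [[U1 V1] [/= NU1 NV1] sA].
case: Hb => [[U2 V2] [/= NU2 NV2] sB].
have NT : nbhs x (T @^-1` V1) := HTcont V1 NV1.
set W := U1 `&` U2 `&` X0 `&` T @^-1` V1.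
have NW : nbhs x W by repeat apply: filterI.
have cl : (fun s : R => s *: v + x) @ (0 : R) --> x.
  have : (fun s : R => s *: v + x) @ (0 : R) --> 0 *: v + x.
    apply: cvgD; last exact: cvg_cst.
    by apply: cvgZr_tmp; exact: cvg_id.
  by rewrite scale0r add0r.
have NS : nbhs (0 : R) [set s | W (s *: v + x)] := cl W NW.
move/nbhs_ballP: NS => [del del0 Hdel].
set t := del / 2.
have t0 : 0 < t by rewrite /t divr_gt0.
have tdel : t < del by rewrite /t ltr_pdivrMr // ltr_pMr // ltr1n.
have inW : forall s, 0 <= s <= t -> W (s *: v + x).
  move=> s /andP [s0 st]; apply: Hdel; rewrite /ball /= sub0r normrN ger0_norm //.
  exact: le_lt_trans st tdel.
set x' := t *: v + x.
have Wx' : W x' by apply: inW; rewrite lexx andbT ltW.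
have [s1 s1in E1] := @mvt_c R d _ (fun z => c_diff z y) x v t t0.
have [s2 s2in E2] := @mvt_c R d _ (fun z => c_diff z (T x')) x v t t0.
rewrite -/x' -PhiE in E1.
rewrite -/x' -PhiE in E2.
have s01 : 0 <= s1 <= t by move: s1in; rewrite in_itv /= => /andP [? ?]; rewrite !ltW.
have s02 : 0 <= s2 <= t by move: s2in; rewrite in_itv /= => /andP [? ?]; rewrite !ltW.
have P1 : Phi (s1 *: v + x, y) < m.
  have [[[? ?] ?] ?] := inW _ s01.
  by apply: (sB (_, _)); split => //; exact: nbhs_singleton.
have P2 : m < Phi (s2 *: v + x, T x').
  have [[[? ?] ?] ?] := inW _ s02.
  have [[[? ?] ?] ?] := Wx'.
  by apply: (sA (_, _)); split.
set r := c x y + c x' (T x') - (c x (T x') + c x' y).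
have r0 : 0 < r.
  have -> : r = t * (Phi (s2 *: v + x, T x') - Phi (s1 *: v + x, y)).
    rewrite /r mulrBr ![t * _]mulrC -E1 -E2; lra.
  by apply: mulr_gt0 => //; rewrite subr_gt0; exact: lt_trans P2.
rewrite /Ifun; apply: (@lt_le_trans _ _ r%:E); first by rewrite lte_fin.
apply: ereal_sup_ubound.
exists 2%N, (fun i : 'I_2 => if val i == 0%N then x else x'),
  (fun i : 'I_2 => if val i == 0%N then y else T x'), (tperm (ord0 : 'I_2) ord_max).
split.
- by [].
- by move=> i /= ->.
- move=> i /= i0; rewrite (gtn_eqF i0) HT /=; split => //.
  by have [[[? ?] ?] ?] := Wx'.
- have L : lift ord0 (ord0 : 'I_1) = ord_max :> 'I_2 by apply/val_inj.
  rewrite !big_ord_recl !big_ord0 L tpermL tpermR /= /r !addr0.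
  by [].
Qed.
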